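(* For each finite set $\tau\subseteq\mathbb{S}$ and each $s\in\mathbb{S}$ there is an MSO sentence $\phi$ over $\mathbb{R}_{\mathrm{tree}}(\mathbb{B}^\tau_{\mathrm{parse}})$ such that for every tree $T\in\mathcal{T}(\mathbb{B}^\tau_{\mathrm{parse}})$: $\|T\|\models\phi$ iff the graph $\mathbf{val}(T)$ has an $s$-source.
   Context: Graphs over a countably infinite set $\mathbb{S}$ of source labels and finite set $\mathbb{A}$ of edge labels: isomorphism classes of finite $\mathbb{A}$-labelled hypergraphs with an injective map $\xi$ from a finite sort into the vertices ($\xi(s)$ is the $s$-source). HR operations: $\mathbf{0}_\sigma$ (one $s$-source for each $s\in\sigma$), $\mathbf{a}_{(s_1,\ldots,s_{\#a})}$ (one $a$-edge on $s_i$-sources), $\mathsf{restrict}_\sigma$ (forget source labels outside $\sigma$; sort $\sigma'\mapsto\sigma\cap\sigma'$), $\mathsf{rename}_\alpha$ ($\alpha$ finite permutation of $\mathbb{S}$; source map $\xi\circ\alpha$), $\parallel$ (disjoint union fusing equally-labelled sources). Trees: with root label $\mathfrak{r}$, trees over an alphabet $\mathbb{B}$ of unary/binary labels are values of ground terms over $\mathbf{c}$ (root with unary $c$-edge), $\mathsf{append}_b$ (new root with a $b$-edge to the old root), $\parallel$ (fuse roots); $\mathcal{T}(\mathbb{B})$ is their set; a tree $T$ is encoded by $\|T\|$ with universe nodes $\cup$ edges over $\mathbb{R}_{\mathrm{tree}}(\mathbb{B})=\{r_b\}_{b\in\mathbb{B}}\cup\{r_\mathfrak{r}\}$ ($r_b(e,\bar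 n)$: $e$ is a $b$-edge on $\bar n$; $r_\mathfrak{r}$: the root). $\mathbb{B}^\tau_{\mathrm{parse}}$: unary labels $\underline{\mathbf{0}}_{\sigma}$ ($\sigma\subseteq\tau$), $\underline{\mathbf{a}}_{(s_1..)}$ ($s_i\in\tau$), binary labels $\underline{\mathsf{restrict}}_{\sigma}$ ($\sigma\subseteq\tau$), $\underline{\mathsf{rename}}_\alpha$ ($\alpha$ fixing everything outside $\tau$). $\mathbf{val}(T)$ is the value of the HR term obtained from a tree term for $T$ by replacing $\underline{\mathbf{c}}$ by $\mathbf{c}$ and $\mathsf{append}_{\underline b}$ by the HR operation $b$. *)

(* Defs.v *)
From mathcomp Require Import all_boot.
From mathcomp Require Import finmap.

Set Implicit Arguments.
Unset Strict Implicit.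
Unset Printing Implicit Defensive.



(* Source labels S := nat (countably infinite).
   Edge labels: a finite type A with an arity function ar : A -> nat. *)

(* HR graphs (concrete representatives; vertices are named by nats).   *)
(*   hV : the vertices, hE : the edges (label, attachment sequence),    *)
(*   hS : the source map as a list of pairs (source label, vertex).    *)
Record hgraph (A : Type) := HG {
  hV : seq nat;
  hE : seq (A * seq nat);
  hS : seq (nat * nat) }.

Definition sort_of A (g : hgraph A) : seq nat := [seq p.1 | p <- hS g].

Definition has_source A (g : hgraph A) (s : nat) : Prop := s \in sort_of g.

(* 0_sigma : one s-source for each s in sigma, nothing else *)
Definition hr_zero A (sigma : {fset nat}) : hgraph A :=
  let l := enum_fset sigma in
  HG (iota 0 (size l)) [::] (zip l (iota 0 (size l))).

(* a_(s_1,...,s_n) : one a-edge on the s_i-sources *)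
Definition hr_edge A (a : A) (ss : seq nat) : hgraph A :=
  let l := undup ss in
  HG (iota 0 (size l)) [:: (a, [seq index s l | s <- ss])]
     (zip l (iota 0 (size l))).

Definition hr_restrict A (sigma : {fset nat}) (g : hgraph A) : hgraph A :=
  HG (hV g) (hE g) [seq p <- hS g | p.1 \in sigma].

(* rename_alpha (alpha a permutation with inverse alphai): new source map
   xi o alpha, i.e. s is a source of the result at xi (alpha s). *)
Definition hr_rename A (alpha alphai : nat -> nat) (g : hgraph A) : hgraph A :=
  HG (hV g) (hE g) [seq (alphai p.1, p.2) | p <- hS g].

(* parallel composition: disjoint union fusing equally labelled sources *)
Definition src_vertex A (g : hgraph A) (s : nat) : option nat :=
  ohead [seq p.2 | p <- hS g & p.1 == s].

Definition hr_par A (g h : hgraph A) : hgraph A :=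
  let N := (\max_(v <- hV g) v).+1 in
  let f v :=
    match ohead [seq p.1 | p <- hS h & p.2 == v] with
    | Some s => match src_vertex g s with Some w => w | None => N + v end
    | None => N + v
    end in
  HG (undup (hV g ++ [seq f v | v <- hV h]))
     (hE g ++ [seq (e.1, [seq f v | v <- e.2]) | e <- hE h])
     (hS g ++ [seq (p.1, f p.2) | p <- hS h & p.1 \notin sort_of g]).

Inductive plab (A : Type) :=
| PZero of {fset nat}
| PEdge of A & seq nat
| PRestrict of {fset nat}
| PRename of (nat -> nat) & (nat -> nat).   (* binary : underline rename_alpha,
                                               given with its inverse *)

Definition plab_unary A (b : plab A) : bool :=
  match b with PZero _ | PEdge _ _ => true | _ => false end.

(* number of nodes an r_b-edge is attached to (1 for unary, 2 for binary) *)
Definition plab_arity A (b : plab A) : nat := if plab_unary b then 1 else 2.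

Definition in_Bparse (A : Type) (ar : A -> nat) (tau : {fset nat}) (b : plab A)
  : Prop :=
  match b with
  | PZero sigma => (sigma `<=` tau)%fset
  | PEdge a ss => size ss = ar a /\ all (fun s => s \in tau) ss
  | PRestrict sigma => (sigma `<=` tau)%fset
  | PRename alpha alphai =>
      cancel alpha alphai /\ cancel alphai alpha /\
      (forall x, x \notin tau -> alpha x = x)
  end.

(* Trees: ground terms over c, append_b, ||                            *)
Inductive tterm (A : Type) :=
| TLeaf of plab A                  (* c : root with a unary c-edge *)
| TApp of plab A & tterm A
| TPar of tterm A & tterm A.       (* fuse roots *)

Fixpoint in_TB A (ar : A -> nat) (tau : {fset nat}) (t : tterm A) : Prop :=
  match t with
  | TLeaf c => plab_unary c /\ in_Bparse ar tau c
  | TApp b t' => ~~ plab_unary b /\ in_Bparse ar tau b /\ in_TB ar tau t'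
  | TPar t1 t2 => in_TB ar tau t1 /\ in_TB ar tau t2
  end.

(* concrete tree: (number of nodes, root, edges (label, attached nodes)).
   Nodes are 0 .. n-1. For append_b the new b-edge is on (new root, old root). *)
Fixpoint build A (t : tterm A) : nat * nat * seq (plab A * seq nat) :=
  match t with
  | TLeaf c => (1, 0, [:: (c, [:: 0])])
  | TApp b t' =>
      let: (n, r, E) := build t' in (n.+1, n, rcons E (b, [:: n; r]))
  | TPar t1 t2 =>
      let: (n1, r1, E1) := build t1 in
      let: (n2, r2, E2) := build t2 in
      let f v := if v == r2 then r1 else if v < r2 then n1 + v else n1 + v - 1 in
      (n1 + n2 - 1, r1, E1 ++ [seq (e.1, [seq f v | v <- e.2]) | e <- E2])
  end.

(* relational structures over R_tree(B): universe {0,...,usize-1},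
   relations r_b (b a label) and r_root *)
Record rstruct (A : Type) := RS {
  usize : nat;
  urel : plab A -> seq nat -> Prop;
  uroot : nat -> Prop }.

(* ||T|| : universe = nodes (0..n-1) and edges (n..n+|E|-1);
   r_b(e, nbar) iff e is a b-edge on nbar; r_root(x) iff x is the root *)
Definition enc A (t : tterm A) : rstruct A :=
  let: (n, r, E) := build t in
  RS (n + size E)
     (fun b xs => exists i, [/\ i < size E,
                  (nth (b, [::]) E i).1 = b &
                  xs = (n + i) :: (nth (b, [::]) E i).2])
     (fun x => x = r).

Inductive mso (A : Type) :=
| MRel of plab A & nat & seq nat
| MRoot of nat
| MEq of nat & nat
| MIn of nat & nat                 (* x in X *)
| MNot of mso A
| MAnd of mso A & mso A
| MOr of mso A & mso A
| MEx1 of nat & mso A              (* exists first-order x *)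
| MEx2 of nat & mso A.             (* exists set X *)

Fixpoint fv1 A (f : mso A) : seq nat :=
  match f with
  | MRel _ x ys => x :: ys
  | MRoot x => [:: x]
  | MEq x y => [:: x; y]
  | MIn x _ => [:: x]
  | MNot g => fv1 g
  | MAnd g h | MOr g h => fv1 g ++ fv1 h
  | MEx1 x g => [seq y <- fv1 g | y != x]
  | MEx2 _ g => fv1 g
  end.

Fixpoint fv2 A (f : mso A) : seq nat :=
  match f with
  | MIn _ X => [:: X]
  | MRel _ _ _ | MRoot _ | MEq _ _ => [::]
  | MNot g => fv2 g
  | MAnd g h | MOr g h => fv2 g ++ fv2 h
  | MEx1 _ g => fv2 g
  | MEx2 X g => [seq Y <- fv2 g | Y != X]
  end.

Definition is_sentence A (f : mso A) : Prop := fv1 f = [::] /\ fv2 f = [::].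

Fixpoint over_Rtree A (ar : A -> nat) (tau : {fset nat}) (f : mso A) : Prop :=
  match f with
  | MRel b _ ys => in_Bparse ar tau b /\ size ys = plab_arity b
  | MRoot _ | MEq _ _ | MIn _ _ => True
  | MNot g | MEx1 _ g | MEx2 _ g => over_Rtree ar tau g
  | MAnd g h | MOr g h => over_Rtree ar tau g /\ over_Rtree ar tau h
  end.

Definition upd {T} (e : nat -> T) (x : nat) (v : T) : nat -> T :=
  fun y => if y == x then v else e y.

Fixpoint sat A (M : rstruct A) (e1 : nat -> nat) (e2 : nat -> nat -> Prop)
  (f : mso A) : Prop :=
  match f with
  | MRel b x ys => urel M b (e1 x :: [seq e1 y | y <- ys])
  | MRoot x => uroot M (e1 x)
  | MEq x y => e1 x = e1 y
  | MIn x X => e2 X (e1 x)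
  | MNot g => ~ sat M e1 e2 g
  | MAnd g h => sat M e1 e2 g /\ sat M e1 e2 h
  | MOr g h => sat M e1 e2 g \/ sat M e1 e2 h
  | MEx1 x g => exists u, u < usize M /\ sat M (upd e1 x u) e2 g
  | MEx2 X g => exists P : nat -> Prop,
      (forall u, P u -> u < usize M) /\ sat M e1 (upd e2 X P) g
  end.

(* M |= phi for a sentence phi (environments are irrelevant) *)
Definition models A (M : rstruct A) (f : mso A) : Prop :=
  sat M (fun _ => 0) (fun _ _ => False) f.

Definition const_op A (c : plab A) : hgraph A :=
  match c with
  | PZero sigma => hr_zero A sigma
  | PEdge a ss => hr_edge a ss
  | _ => HG [::] [::] [::] (* not a unary label: never occurs in T(B) *)
  end.

Definition unary_op A (b : plab A) (g : hgraph A) : hgraph A :=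
  match b with
  | PRestrict sigma => hr_restrict sigma g
  | PRename alpha alphai => hr_rename alpha alphai g
  | _ => g (* not a binary label: never occurs in T(B) *)
  end.

Fixpoint hr_value A (t : tterm A) : hgraph A :=
  match t with
  | TLeaf c => const_op c
  | TApp b t' => unary_op b (hr_value t')
  | TPar t1 t2 => hr_par (hr_value t1) (hr_value t2)
  end.

(* Main.v *)
Require Import Defs.
From mathcomp Require Import all_boot finmap zify.
From Stdlib Require Import Classical FunctionalExtensionality.
Set Implicit Arguments. Unset Strict Implicit. Unset Printing Implicit Defensive.

Lemma In_cat {T} (x : T) s1 s2 : List.In x (s1 ++ s2) <-> List.In x s1 \/ List.In x s2.
Proof. elim: s1 => /= [|y s IH]; first tauto. rewrite IH; tauto. Qed.

Lemma In_map {T U} (f : T -> U) x s : List.In x s -> List.In (f x) (map f s).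
Proof. elim: s => //= y s IH [->|H]; [by left|right; exact: IH]. Qed.

Lemma In_map_inv {T U} (f : T -> U) y s : List.In y (map f s) -> exists x, List.In x s /\ y = f x.
Proof. elim: s => //= x s IH [<-|/IH [z [H1 H2]]]; [exists x; tauto| exists z; tauto]. Qed.

Lemma In_nth {T} (d : T) x s : List.In x s <-> exists i, i < size s /\ nth d s i = x.
Proof.
elim: s => /= [|y s IH]; first by split=> // [[i []]].
split.
- case=> [<-|/IH [i [H1 H2]]]; first by exists 0.
  by exists i.+1.
- case=> [[|i]] /= [H1 H2]; first by left.
  right; apply/IH; by exists i.
Qed.

Lemma In_mem {T : eqType} (x : T) s : List.In x s <-> x \in s.
Proof.
elim: s => //= y s IH; rewrite inE; split.
- by case=> [->|/IH ->]; rewrite ?eqxx ?orbT.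
- by case/orP=> [/eqP ->|/IH]; auto.
Qed.

Goal forall n m : nat, n < m -> n.+1 <= m + 0 - 0. lia. Qed.

Definition trans A (b : plab A) (q : nat) : option nat :=
  match b with
  | PRestrict sigma => if q \in sigma then Some q else None
  | PRename al _ => Some (al q)
  | _ => None
  end.

Definition acc A (c : plab A) (q : nat) : bool :=
  match c with
  | PZero sigma => q \in sigma
  | PEdge _ ss => q \in ss
  | _ => false
  end.

Inductive reach A (E : seq (plab A * seq nat)) (x : nat * nat) : nat * nat -> Prop :=
| R0 : reach E x x
| Rstep b u w q q' : reach E x (u, q) -> List.In (b, [:: u; w]) E ->
    trans b q = Some q' -> reach E x (w, q').

Definition good A (E : seq (plab A * seq nat)) r q :=
  exists v q', reach E (r, q) (v, q') /\ exists c, List.In (c, [:: v]) E /\ acc c q'.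

Lemma reach_mono A (E E' : seq (plab A * seq nat)) x y :
  (forall e, List.In e E -> List.In e E') -> reach E x y -> reach E' x y.
Proof.
move=> H; elim=> [|b u w q q' _ IH Hi Ht]; first exact: R0.
exact: Rstep IH (H _ Hi) Ht.
Qed.

Lemma reach_trans A (E : seq (plab A * seq nat)) x y z :
  reach E x y -> reach E y z -> reach E x z.
Proof.
move=> Hxy; elim=> [|b u w q q' _ IH Hi Ht] //.
exact: Rstep IH Hi Ht.
Qed.

Lemma reach_bound A (E : seq (plab A * seq nat)) n r q y :
  r < n -> (forall b u w, List.In (b, [:: u; w]) E -> w < n) ->
  reach E (r, q) y -> y.1 < n.
Proof.
move=> Hr H; elim=> [|b u w q0 q' _ IH Hi Ht] //=.
exact: H Hi.
Qed.

Lemma reach_noret A (E : seq (plab A * seq nat)) r q y :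
  (forall b u w, List.In (b, [:: u; w]) E -> w != r) ->
  reach E (r, q) y -> y.1 = r -> y.2 = q.
Proof.
move=> H; elim=> [|b u w q0 q' _ IH Hi Ht] //= Hw.
by move: (H _ _ _ Hi); rewrite Hw eqxx.
Qed.

Definition mapE A (f : nat -> nat) (E : seq (plab A * seq nat)) :=
  [seq (e.1, [seq f v | v <- e.2]) | e <- E].

Lemma reach_map A (E : seq (plab A * seq nat)) f x q y :
  reach E (x, q) y -> reach (mapE f E) (f x, q) (f y.1, y.2).
Proof.
elim=> [|b u w q0 q' _ IH Hi Ht] /=; first exact: R0.
apply: Rstep IH _ Ht.
exact: (In_map (fun e => (e.1, [seq f v | v <- e.2])) Hi).
Qed.

Definition inv A (ar : A -> nat) (tau : {fset nat}) n r (E : seq (plab A * seq nat)) :=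
  [/\ r < n,
   (forall b l, List.In (b, l) E -> all (fun v => v < n) l /\ in_Bparse ar tau b) &
   (forall b u w, List.In (b, [:: u; w]) E -> w != r)].

Lemma inv_tgt A (ar : A -> nat) tau n r E :
  inv ar tau n r E -> forall b u w, List.In (b, [:: u; w]) E -> w < n.
Proof. by case=> _ H _ b u w /H [/= /and3P [_ ->]]. Qed.

Lemma inv_src A (ar : A -> nat) tau n r E :
  inv ar tau n r E -> forall b l v, List.In (b, l) E -> v \in l -> v < n.
Proof. by case=> _ H _ b l v /H [/allP H1 _] /H1. Qed.

Lemma map1_map (F : nat * nat -> nat * nat) l :
  (forall p, (F p).1 = p.1) -> [seq p.1 | p <- map F l] = [seq p.1 | p <- l].
Proof. by move=> H; elim: l => //= p l ->; rewrite H. Qed.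

Lemma mem_map1_filter q (P : pred nat) (l : seq (nat * nat)) :
  (q \in [seq p.1 | p <- l & P p.1]) = (q \in [seq p.1 | p <- l]) && P q.
Proof.
elim: l => //= p l IH; case: ifP => Hp /=; rewrite !inE IH.
- by case: (q =P p.1) => [->|_] /=; rewrite ?Hp ?andbF ?orbT.
- by case: (q =P p.1) => [->|_] /=; rewrite ?Hp ?andbF ?orbT.
Qed.

Lemma sort_par A (g h : hgraph A) q :
  has_source (hr_par g h) q <-> has_source g q \/ has_source h q.
Proof.
rewrite /has_source /sort_of /hr_par /= map_cat mem_cat map1_map //.
rewrite (mem_map1_filter q (fun x => x \notin [seq p.1 | p <- hS g])).
case: (q \in [seq p.1 | p <- hS g]); case: (q \in [seq p.1 | p <- hS h]); simpl; intuition.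
Qed.

Lemma sort_restrict A sigma (g : hgraph A) q :
  has_source (hr_restrict sigma g) q <-> has_source g q /\ q \in sigma.
Proof.
rewrite /has_source /sort_of /= (mem_map1_filter q (fun x => x \in sigma)).
by case: (q \in [seq p.1 | p <- hS g]); case: (q \in sigma); intuition.
Qed.

Lemma sort_rename A al ali (g : hgraph A) q :
  cancel al ali -> cancel ali al ->
  has_source (hr_rename al ali g) q <-> has_source g (al q).
Proof.
move=> c1 c2; rewrite /has_source /sort_of /= -map_comp.
have -> : [seq (ali \o (fun p : nat * nat => p.1)) x | x <- hS g] = [seq ali p | p <- [seq p.1 | p <- hS g]].
  by rewrite -map_comp.
split.
- by case/mapP=> x Hx ->; rewrite c2.
- by move=> H; rewrite -[q]c1; apply: map_f.
Qed.

Definition fpar n1 r1 r2 v := if v == r2 then r1 else if v < r2 then n1 + v else n1 + v - 1.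

Lemma fpar_r n1 r1 r2 : fpar n1 r1 r2 r2 = r1.
Proof. by rewrite /fpar eqxx. Qed.

Lemma fpar_ge n1 r1 r2 v : v != r2 -> n1 <= fpar n1 r1 r2 v.
Proof. rewrite /fpar => Hv; rewrite (negbTE Hv); move/eqP: Hv => Hv; case: ltnP => H; lia. Qed.


Lemma fpar_bound n1 n2 r1 r2 v : r1 < n1 -> r2 < n2 -> v < n2 -> fpar n1 r1 r2 v < n1 + n2 - 1.
Proof. rewrite /fpar => H1 H2 H3; case: (v =P r2) => H; case: (ltnP v r2) => H'; lia. Qed.

Lemma fpar_inj n1 r1 r2 u v : r1 < n1 -> fpar n1 r1 r2 u = fpar n1 r1 r2 v -> u = v.
Proof.
rewrite /fpar => H1; case: (u =P r2) => Hu; case: (v =P r2) => Hv; try congruence;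
 case: (ltnP u r2) => Hu'; case: (ltnP v r2) => Hv'; lia.
Qed.

Lemma fpar_small n1 r1 r2 v : fpar n1 r1 r2 v < n1 -> v = r2.
Proof. case: (v =P r2) => // /eqP /(fpar_ge n1 r1) H1 H2; lia. Qed.

Lemma In_one {T} (x y : T) : List.In x [:: y] -> x = y.
Proof. by case=> [->|[]]. Qed.

Lemma In_one2 {T} (b0 b : T) (u w n r : nat) :
  List.In (b0, [:: u; w]) [:: (b, [:: n; r])] -> [/\ b0 = b, u = n & w = r].
Proof. move=> Hi; have H := In_one Hi; inversion H; by subst. Qed.

Lemma In_one21 {T} (b0 b : T) (u n r : nat) :
  List.In (b0, [:: u]) [:: (b, [:: n; r])] -> False.
Proof. move=> Hi; have H := In_one Hi; inversion H. Qed.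

Lemma reach_leaf A (c : plab A) q y :
  reach [:: (c, [:: 0])] (0, q) y -> y = (0, q).
Proof. elim=> // b u w q0 q' _ _ Hi; move: (In_one Hi) => H; inversion H. Qed.

Lemma good_leaf A (c : plab A) q : good [:: (c, [:: 0])] 0 q <-> acc c q.
Proof.
split.
- case=> v [q' [Hr [c' [Hc H]]]].
  move: (reach_leaf Hr) => E1; inversion E1; subst.
  move: (In_one Hc) => E2; inversion E2; subst; done.
- move=> H; exists 0, q; split; first exact: R0.
  by exists c; split=> //; left.
Qed.

Lemma hs_leaf A (c : plab A) q : plab_unary c ->
  has_source (hr_value (TLeaf c)) q <-> acc c q.
Proof.
case: c => //= [sigma|a ss] _; rewrite /has_source /sort_of /=.
- have -> : [seq p.1 | p <- zip (enum_fset sigma) (iota 0 (size (enum_fset sigma)))]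
     = enum_fset sigma by apply: unzip1_zip; rewrite size_iota.
  by [].
- have -> : [seq p.1 | p <- zip (undup ss) (iota 0 (size (undup ss)))]
     = undup ss by apply: unzip1_zip; rewrite size_iota.
  by rewrite mem_undup.
Qed.

Lemma good_app A (E : seq (plab A * seq nat)) n r b q :
  r < n -> (forall b l v, List.In (b, l) E -> v \in l -> v < n) ->
  good (E ++ [:: (b, [:: n; r])]) n q <->
  exists q'', trans b q = Some q'' /\ good E r q''.
Proof.
move=> Hr Hb.
have Htg : forall b0 u w, List.In (b0, [:: u; w]) E -> w < n.
  by move=> b0 u w Hi; apply: (Hb _ _ _ Hi); rewrite !inE eqxx orbT.
have Hsrc : forall b0 l, List.In (b0, n :: l) E -> False.
  by move=> b0 l Hi; have := Hb _ _ n Hi; rewrite inE eqxx ltnn => /(_ isT).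
have claim : forall y, reach (E ++ [:: (b, [:: n; r])]) (n, q) y ->
   y = (n, q) \/ exists q'', trans b q = Some q'' /\ reach E (r, q'') y.
  move=> y; elim=> [|b0 u w q0 q' _ IH Hi Ht]; first by left.
  case/In_cat: Hi => [Hi|Hi2].
  - case: IH => [E0|[q'' [Ht'' Hr'']]].
    + by case: E0 => Eu Eq; subst u; case: (Hsrc _ _ Hi).
    + right; exists q''; split=> //; exact: Rstep Hr'' Hi Ht.
  - case: (In_one2 Hi2) => Eb Eu Ew.
    subst b0 u w; case: IH => [E0|[q'' [_ Hr'']]].
    + case: E0 => Eq.
      subst q0; right; exists q'; split=> //; exact: R0.
    + by have := reach_bound Hr Htg Hr''; rewrite ltnn.
split.
- case=> v [q' [/claim [E0|[q'' [Ht Hr'']]] [c [Hc Ha]]]].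
  + case: E0 => Ev Eq; subst v.
    case/In_cat: Hc => [/Hsrc //|Hc2]; case: (In_one21 Hc2).
  + exists q''; split=> //; exists v, q'; split=> //; exists c; split=> //.
    case/In_cat: Hc => [//|Hc2]; case: (In_one21 Hc2).
- case=> q'' [Ht [v [q' [Hr' [c [Hc Ha]]]]]].
  exists v, q'; split.
  + apply: reach_trans (Rstep (R0 _ _) _ Ht) _.
      by apply/In_cat; right; left.
    apply: reach_mono Hr' => e He; apply/In_cat; by left.
  + by exists c; split=> //; apply/In_cat; left.
Qed.

Lemma In_mapE A f (E : seq (plab A * seq nat)) b l :
  List.In (b, l) (mapE f E) -> exists l0, List.In (b, l0) E /\ l = [seq f v | v <- l0].
Proof.
move=> Hi0; have [[b0 l0] [Hi He]] := In_map_inv Hi0; case: He => -> ->; by exists l0.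
Qed.

Lemma map_two (f : nat -> nat) l u w : [:: u; w] = [seq f v | v <- l] ->
  exists u0 w0, [/\ l = [:: u0; w0], u = f u0 & w = f w0].
Proof. case: l => [|u0 [|w0 [|]]] //= [-> ->]; by exists u0, w0. Qed.

Lemma map_one (f : nat -> nat) l u : [:: u] = [seq f v | v <- l] ->
  exists u0, l = [:: u0] /\ u = f u0.
Proof. case: l => [|u0 [|]] //= [->]; by exists u0. Qed.

Lemma good_par A (ar : A -> nat) tau n1 r1 E1 n2 r2 E2 q :
  inv ar tau n1 r1 E1 -> inv ar tau n2 r2 E2 ->
  good (E1 ++ mapE (fpar n1 r1 r2) E2) r1 q <-> good E1 r1 q \/ good E2 r2 q.
Proof.
move=> I1 I2.
have [Hr1 _ Hn1] := I1; have [Hr2 _ Hn2] := I2.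
set f := fpar n1 r1 r2.
have Hb1 := reach_bound Hr1 (inv_tgt I1).
have Hb2 := reach_bound Hr2 (inv_tgt I2).
have Hnr1 : forall q0 y, reach E1 (r1, q0) y -> y.1 = r1 -> y.2 = q0 := fun q0 y => reach_noret Hn1.
have Hnr2 : forall q0 y, reach E2 (r2, q0) y -> y.1 = r2 -> y.2 = q0 := fun q0 y => reach_noret Hn2.
have claim : forall y, reach (E1 ++ mapE f E2) (r1, q) y ->
   reach E1 (r1, q) y \/ exists y0, reach E2 (r2, q) (y0, y.2) /\ y.1 = f y0.
  move=> y; elim=> [|b u w q0 q' _ IH Hi Ht]; first by left; exact: R0.
  case/In_cat: Hi => [Hi|Hi0]; last have [l0 [Hi Hl]] := In_mapE Hi0.
  - case: IH => [IH|[u0 [IH Eu]]]; first by left; exact: Rstep IH Hi Ht.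
    have Hu : u < n1 by apply: (inv_src I1 Hi); rewrite inE eqxx.
    rewrite /= in Eu; subst u.
    have Eu0 := fpar_small Hu; subst u0.
    have Eq := Hnr2 _ _ IH erefl; rewrite /= in Eq; subst q0.
    rewrite /f fpar_r in Hi Hu.
    left; exact: Rstep (R0 _ _) Hi Ht.
  - have [u0 [w0 [El Eu Ew]]] := map_two Hl; subst l0 u w.
    case: IH => [IH|[u1 [IH Eu]]].
    + have := Hb1 _ _ IH => /= /fpar_small Eu0; subst u0.
      have Eq := Hnr1 _ _ IH (fpar_r _ _ _); rewrite /= in Eq; subst q0.
      right; exists w0; split=> //; exact: Rstep (R0 _ _) Hi Ht.
    + rewrite /= in Eu; have Eu1 := fpar_inj Hr1 Eu; subst u1.
      right; exists w0; split=> //; exact: Rstep IH Hi Ht.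
split.
- case=> v [q' [/claim Hr [c [Hc Ha]]]].
  case: Hr => [Hr|[y0 [Hr Ev]]].
  + case/In_cat: Hc => [Hc|Hc0]; last have [l0 [Hc Hl]] := In_mapE Hc0.
    * by left; exists v, q'; split=> //; exists c.
    * have [v0 [El Ev]] := map_one Hl; subst l0 v.
      have := Hb1 _ _ Hr => /= /fpar_small Ev0; subst v0.
      have Eq := Hnr1 _ _ Hr (fpar_r _ _ _); rewrite /= in Eq; subst q'.
      right; exists r2, q; split; first exact: R0.
      by exists c.
  + rewrite /= in Ev; subst v.
    case/In_cat: Hc => [Hc|Hc0]; last have [l0 [Hc Hl]] := In_mapE Hc0.
    * have Hv : f y0 < n1 by apply: (inv_src I1 Hc); rewrite inE eqxx.
      have Ey0 := fpar_small Hv; subst y0.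
      have Eq := Hnr2 _ _ Hr erefl; rewrite /= in Eq; subst q'.
      rewrite /f fpar_r in Hc.
      left; exists r1, q; split; first exact: R0.
      by exists c.
    * have [v0 [El Ev]] := map_one Hl; subst l0.
      have Ev0 := fpar_inj Hr1 Ev; subst v0.
      right; exists y0, q'; split=> //; by exists c.
- case=> [[v [q' [Hr [c [Hc Ha]]]]]|[v [q' [Hr [c [Hc Ha]]]]]].
  + exists v, q'; split; first by apply: reach_mono Hr => e He; apply/In_cat; left.
    by exists c; split=> //; apply/In_cat; left.
  + exists (f v), q'; split.
    * have := reach_map f Hr; rewrite /= /f fpar_r => H.
      by apply: reach_mono H => e He; apply/In_cat; right.
    * exists c; split=> //; apply/In_cat; right.
      exact: (In_map (fun e => (e.1, [seq f v | v <- e.2])) Hc).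
Qed.

Lemma all_lt_weak (l : seq nat) n m : n <= m -> all (fun v => v < n) l -> all (fun v => v < m) l.
Proof. move=> H /allP Hl; apply/allP => v /Hl Hv; exact: leq_trans Hv H. Qed.

Lemma key A (ar : A -> nat) tau (T : tterm A) : forall n r E,
  build T = (n, r, E) -> in_TB ar tau T ->
  inv ar tau n r E /\ (forall q, has_source (hr_value T) q <-> good E r q).
Proof.
elim: T => [c|b t IH|t1 IH1 t2 IH2] n r E.
- case=> <- <- <- [Hu HB]; split.
  + split=> //.
    * by move=> b l Hi; have H := In_one Hi; inversion H; subst.
    * by move=> b u w Hi; have H := In_one Hi; inversion H.
  + by move=> q; rewrite hs_leaf // good_leaf.
- rewrite /=; case B: (build t) => [[n' r'] E'] [<- <- <-] [Hb [HB Ht]].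
  have [[Hr' Hl' Hn'] Hs] := IH _ _ _ B Ht.
  rewrite -cats1; split.
  + split=> //.
    * move=> b0 l /In_cat [Hi|Hi].
      - by have [H1 H2] := Hl' _ _ Hi; split=> //; apply: all_lt_weak H1.
      - have H := In_one Hi; inversion H; subst; split=> //=.
        rewrite ltnSn /=; apply/andP; split=> //; exact: ltnW.
    * move=> b0 u w /In_cat [Hi|Hi].
      - by have := inv_tgt (And3 Hr' Hl' Hn') Hi; rewrite neq_ltn => ->.
      - have [_ _ ->] := In_one2 Hi; by rewrite neq_ltn Hr'.
  + move=> q; rewrite (@good_app _ E' n' r' b q Hr'); last first.
      by move=> b0 l v Hi; apply: (inv_src (And3 Hr' Hl' Hn') Hi).
    case: b Hb HB => //= [sigma|al ali] _ HB.
    * rewrite sort_restrict Hs; case: (q \in sigma); split.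
      - by case=> H _; exists q.
      - by case=> q'' [[<-] H].
      - by case=> _.
      - by case=> q'' [].
    * case: HB => c1 [c2 _]; rewrite sort_rename // Hs; split.
      - by move=> H; exists (al q).
      - by case=> q'' [[<-]].
- rewrite /=; case B1: (build t1) => [[n1 r1] E1]; case B2: (build t2) => [[n2 r2] E2].
  move=> Heq [Ht1 Ht2].
  have {Heq} [<- <- <-] : (n1 + n2 - 1, r1, E1 ++ mapE (fpar n1 r1 r2) E2) = (n, r, E) by exact: Heq.
  have [I1 Hs1] := IH1 _ _ _ B1 Ht1.
  have [I2 Hs2] := IH2 _ _ _ B2 Ht2.
  have [Hr1 Hl1 Hn1] := I1; have [Hr2 Hl2 Hn2] := I2.
  split.
  + split.
    * lia.
    * move=> b l /In_cat [Hi|Hi].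
      - have [H1 H2] := Hl1 _ _ Hi; split=> //; apply: all_lt_weak H1; lia.
      - have [l0 [Hi0 El]] := In_mapE Hi; subst l.
        have [/allP H1 H2] := Hl2 _ _ Hi0; split=> //.
        apply/allP => v /mapP [v0 /H1 Hv0 ->]; exact: fpar_bound.
    * move=> b u w /In_cat [Hi|Hi]; first exact: Hn1 Hi.
      have [l0 [Hi0 El]] := In_mapE Hi.
      have [u0 [w0 [E0 Eu Ew]]] := map_two El; subst l0 w.
      have H := fpar_ge n1 r1 (Hn2 _ _ _ Hi0).
      rewrite neq_ltn; apply/orP; right; exact: leq_trans Hr1 H.
  + move=> q; rewrite /= sort_par Hs1 Hs2 (good_par q I1 I2) //.
Qed.

Definition Ff {A} : mso A := MEx1 0 (MNot (MEq _ 0 0)).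
Definition Tt {A} : mso A := MNot Ff.

Fixpoint conjL {A T} (l : seq T) (F : T -> mso A) : mso A :=
  match l with [::] => Tt | x :: l' => MAnd (F x) (conjL l' F) end.
Fixpoint disjL {A T} (l : seq T) (F : T -> mso A) : mso A :=
  match l with [::] => Ff | x :: l' => MOr (F x) (disjL l' F) end.

Definition EdgeCl {A} (b : plab A) q q' : mso A :=
  MNot (MEx1 0 (MEx1 1 (MEx1 2 (MAnd (MRel b 0 [:: 1; 2]) (MAnd (MIn _ 1 q) (MNot (MIn _ 2 q'))))))).
Definition clause {A} (Q : seq nat) (b : plab A) q : mso A :=
  match trans b q with Some q' => if q' \in Q then EdgeCl b q q' else Tt | None => Tt end.
Definition accCl {A} (c : plab A) q : mso A :=
  if acc c q then MEx1 0 (MEx1 1 (MAnd (MRel c 0 [:: 1]) (MIn _ 1 q))) else Ff.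
Definition rootCl {A} s : mso A := MEx1 0 (MAnd (MRoot _ 0) (MIn _ 0 s)).
Definition body {A} (Lb : seq (plab A)) Q s : mso A :=
  MAnd (conjL Lb (fun b => conjL Q (clause Q b)))
       (MAnd (rootCl s) (MNot (disjL Lb (fun c => disjL Q (accCl c))))).
Definition phi {A} (Lb : seq (plab A)) Q s : mso A :=
  MNot (foldr (fun X g => MEx2 X g) (body Lb Q s) Q).


Lemma sat_Ff A (M : rstruct A) e1 e2 : ~ sat M e1 e2 Ff.
Proof. by case=> u [_ /=]; apply. Qed.

Lemma sat_Tt A (M : rstruct A) e1 e2 : sat M e1 e2 Tt.
Proof. exact: sat_Ff. Qed.

Lemma sat_conjL A T (M : rstruct A) e1 e2 (l : seq T) F :
  sat M e1 e2 (conjL l F) <-> forall x, List.In x l -> sat M e1 e2 (F x).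
Proof.
elim: l => /= [|y l IH]; first by split=> // _; exact: sat_Tt.
rewrite IH; split.
- by case=> H1 H2 x [<-|/H2].
- move=> H; split; [apply: H; by left | move=> x Hx; apply: H; by right].
Qed.

Lemma sat_disjL A T (M : rstruct A) e1 e2 (l : seq T) F :
  sat M e1 e2 (disjL l F) <-> exists x, List.In x l /\ sat M e1 e2 (F x).
Proof.
elim: l => /= [|y l IH]; first by split=> [/sat_Ff|[x [[]]]].
rewrite IH; split.
- case=> [H|[x [Hx H]]]; [exists y; by split; [left|] | exists x; by split; [right|]].
- case=> x [[<-|Hx] H]; [by left | right; by exists x].
Qed.

Lemma sat_ex2s A (M : rstruct A) e1 e2 g (Q : seq nat) :
  sat M e1 e2 (foldr (fun X g => MEx2 X g) g Q) <->
  exists e2', [/\ (forall X, X \notin Q -> e2' X = e2 X),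
                  (forall X u, X \in Q -> e2' X u -> u < usize M) &
                  sat M e1 e2' g].
Proof.
elim: Q e2 => /= [|q Q IH] e2.
- split; first by move=> H; exists e2.
  by case=> e2' [H _ Hs]; have -> : e2 = e2' by apply: functional_extensionality => X; rewrite H.
- split.
  + case=> P [HP /IH [e2' [Ha Hb Hs]]]; exists e2'; split=> //.
    * move=> X; rewrite inE negb_or => /andP [/negbTE HX HQ].
      by rewrite Ha // /upd HX.
    * move=> X u; rewrite inE; case HXQ: (X \in Q); first by move=> _; apply: Hb.
      rewrite orbF => /eqP EX; subst X; rewrite Ha; last by rewrite HXQ.
      rewrite /upd eqxx; exact: HP.
  + case=> e2' [Ha Hb Hs]; exists (e2' q); split.
      by move=> u; apply: Hb; rewrite mem_head.
    apply/IH; exists e2'; split=> //.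
    * move=> X HX; rewrite /upd; case: eqP => [->//|/eqP HXq].
      by apply: Ha; rewrite inE negb_or HXq.
    * by move=> X u HX; apply: Hb; rewrite inE HX orbT.
Qed.

Lemma sat_Edge A (M : rstruct A) e1 e2 b q q' :
  sat M e1 e2 (EdgeCl b q q') <-> forall x y z, x < usize M -> y < usize M -> z < usize M ->
     urel M b [:: x; y; z] -> e2 q y -> e2 q' z.
Proof.
rewrite /= /upd /=; split.
- move=> H x y z Hx Hy Hz Hr H1; apply: NNPP => H2; apply: H.
  exists x; split=> //; exists y; split=> //; exists z; split=> //.
- move=> H [x [Hx [y [Hy [z [Hz [Hr [H1 H2]]]]]]]]; apply: H2; exact: H Hr H1.
Qed.

Lemma sat_acc A (M : rstruct A) e1 e2 c q :
  sat M e1 e2 (accCl c q) <-> acc c q /\ exists x y, [/\ x < usize M, y < usize M,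
     urel M c [:: x; y] & e2 q y].
Proof.
rewrite /accCl; case: (acc c q); last by split=> [/sat_Ff|[]].
rewrite /= /upd /=; split.
- case=> x [Hx [y [Hy [H1 H2]]]]; split=> //; by exists x, y.
- case=> _ [x [y [Hx Hy H1 H2]]]; exists x; split=> //; by exists y.
Qed.

Lemma sat_root A (M : rstruct A) e1 e2 s :
  sat M e1 e2 (rootCl s) <-> exists x, [/\ x < usize M, uroot M x & e2 s x].
Proof.
rewrite /= /upd /=; split.
- case=> x [Hx [H1 H2]]; by exists x.
- case=> x [Hx H1 H2]; by exists x.
Qed.

Definition relE {A} n (E : seq (plab A * seq nat)) (b : plab A) (xs : seq nat) : Prop :=
  exists i, [/\ i < size E, (nth (b, [::]) E i).1 = b &
               xs = (n + i) :: (nth (b, [::]) E i).2].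

Lemma relE_In A n (E : seq (plab A * seq nat)) b x l : relE n E b (x :: l) -> List.In (b, l) E.
Proof.
case=> i [Hi H1 [_ H2]]; apply/(In_nth (b, [::])); exists i; split=> //.
by move: H1 H2; case: (nth _ E i) => b0 l0 /= -> ->.
Qed.

Lemma In_relE A n (E : seq (plab A * seq nat)) b l : List.In (b, l) E ->
  exists x, x < n + size E /\ relE n E b (x :: l).
Proof.
case/(In_nth (b, [::])) => i [Hi Hn]; exists (n + i); split; first by rewrite ltn_add2l.
by exists i; rewrite Hn.
Qed.

Lemma trans_Q A (ar : A -> nat) tau (b : plab A) s q q' :
  in_Bparse ar tau b -> q \in s :: enum_fset tau -> trans b q = Some q' ->
  q' \in s :: enum_fset tau.
Proof.
case: b => //= [sigma|al ali].
- by move=> _ Hq; case: ifP => // _ [<-].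
- case=> c1 [c2 Hfix] Hq [<-].
  case Hqt: (q \in tau).
  + have Hin : al q \in tau.
      apply: contraT => Hn; have := Hfix _ Hn => /(congr1 ali); rewrite !c1 => Eq.
      by move: Hn; rewrite Eq Hqt.
    by rewrite inE; apply/orP; right.
  + by rewrite Hfix ?Hqt.
Qed.

Lemma mso_ok A (ar : A -> nat) tau (Lb : seq (plab A)) (s : nat) n r E :
  (forall b, in_Bparse ar tau b -> List.In b Lb) -> inv ar tau n r E ->
  models (RS (n + size E) (relE n E) (fun x => x = r)) (phi Lb (s :: enum_fset tau) s)
  <-> good E r s.
Proof.
move=> Hcov I; have [Hr Hl Hn] := I.
set Q := s :: enum_fset tau.
set M := RS (n + size E) (relE n E) (fun x => x = r).
have HN : forall v, v < n -> v < usize M by move=> v Hv /=; apply: leq_trans Hv (leq_addr _ _).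
have Hbd := reach_bound Hr (inv_tgt I).
change (~ sat M (fun _ => 0) (fun _ _ => False) (foldr (fun X g => MEx2 X g) (body Lb Q s) Q) <-> good E r s).
split.
- move=> Hneg; apply: NNPP => Hg; apply: Hneg; apply/sat_ex2s.
  exists (fun X => if X \in Q then (fun v => reach E (r, s) (v, X)) else (fun _ => False)).
  split.
  + by move=> X /negbTE ->.
  + by move=> X u ->; move/Hbd; apply: HN.
  + split; last split.
    * apply/sat_conjL => b Hb; apply/sat_conjL => q /In_mem Hq.
      rewrite /clause; case Ht: (trans b q) => [q'|]; last exact: sat_Tt.
      case: ifP => Hq'; last exact: sat_Tt.
      apply/sat_Edge => x y z _ _ _ Hrel; rewrite /= Hq Hq' => Hy.
      exact: Rstep Hy (relE_In Hrel) Ht.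
    * apply/sat_root; exists r; split=> //; first exact: HN.
      by rewrite /= mem_head; exact: R0.
    * move/sat_disjL => [c [Hc /sat_disjL [q [/In_mem Hq /sat_acc [Ha [x [y [_ _ Hrel Hy]]]]]]]].
      apply: Hg; exists y, q; move: Hy; rewrite /= Hq => Hy; split=> //.
      by exists c; split=> //; exact: relE_In Hrel.
- move=> Hg /sat_ex2s [e2' [_ Hbd2 [Hcl [Hroot Hnacc]]]].
  have Hreach : forall y, reach E (r, s) y -> y.2 \in Q /\ e2' y.2 y.1.
    move=> y; elim=> [|b u w q q' _ [IH1 IH2] Hi Ht].
    + split; first exact: mem_head.
      by have [x [_ /= -> H]] := (sat_root _ _ _ _).1 Hroot.
    + have [Hlu HB] := Hl _ _ Hi.
      have Hq' := trans_Q HB IH1 Ht.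
      split=> //=.
      have := (sat_conjL _ _ _ _ _).1 Hcl b (Hcov _ HB).
      move/sat_conjL => /(_ q (proj2 (In_mem _ _) IH1)).
      rewrite /clause Ht Hq' => /sat_Edge H.
      have [x [Hx Hrel]] := In_relE n Hi.
      apply: (H x u w Hx _ _ Hrel IH2).
      * apply: HN; apply: (inv_src I Hi); exact: mem_head.
      * apply: HN; apply: (inv_tgt I Hi).
  case: Hg => v [q' [Hrv [c [Hc Ha]]]].
  have [Hq' Hv] := Hreach _ Hrv.
  apply: Hnacc; apply/sat_disjL; exists c; split; first by apply: Hcov; exact: (Hl _ _ Hc).2.
  apply/sat_disjL; exists q'; split; first exact/In_mem.
  apply/sat_acc; split=> //.
  have [x [Hx Hrel]] := In_relE n Hc.
  exists x, v; split=> //.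
  apply: HN; apply: (inv_src I Hc); exact: mem_head.
Qed.

Lemma fv1_ex2s A (g : mso A) Q : fv1 (foldr (fun X g => MEx2 X g) g Q) = fv1 g.
Proof. by elim: Q => //= q Q ->. Qed.

Lemma fv2_ex2s A (g : mso A) Q :
  fv2 (foldr (fun X g => MEx2 X g) g Q) = [seq X <- fv2 g | X \notin Q].
Proof.
elim: Q => /= [|q Q ->]; first by rewrite filter_predT.
rewrite -filter_predI; apply: eq_filter => x /=; by rewrite inE negb_or.
Qed.

Lemma fv1_conjL A T (l : seq T) (F : T -> mso A) :
  (forall x, List.In x l -> fv1 (F x) = [::]) -> fv1 (conjL l F) = [::].
Proof. elim: l => //= y l IH H; rewrite H; [rewrite IH // => x Hx; apply: H; by right | by left]. Qed.

Lemma fv1_disjL A T (l : seq T) (F : T -> mso A) :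
  (forall x, List.In x l -> fv1 (F x) = [::]) -> fv1 (disjL l F) = [::].
Proof. elim: l => //= y l IH H; rewrite H; [rewrite IH // => x Hx; apply: H; by right | by left]. Qed.

Lemma fv2_conjL A T (Q : seq nat) (l : seq T) (F : T -> mso A) :
  (forall x, List.In x l -> forall X, X \in fv2 (F x) -> X \in Q) ->
  forall X, X \in fv2 (conjL l F) -> X \in Q.
Proof.
elim: l => //= y l IH H X; rewrite mem_cat => /orP [HX|HX].
- by apply: (H y) => //; left.
- by apply: IH HX => x Hx; apply: H; right.
Qed.

Lemma fv2_disjL A T (Q : seq nat) (l : seq T) (F : T -> mso A) :
  (forall x, List.In x l -> forall X, X \in fv2 (F x) -> X \in Q) ->
  forall X, X \in fv2 (disjL l F) -> X \in Q.
Proof.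
elim: l => //= y l IH H X; rewrite mem_cat => /orP [HX|HX].
- by apply: (H y) => //; left.
- by apply: IH HX => x Hx; apply: H; right.
Qed.

Lemma filter_notin_nil (Q l : seq nat) :
  (forall X, X \in l -> X \in Q) -> [seq X <- l | X \notin Q] = [::].
Proof.
elim: l => //= x l IH H; rewrite H ?mem_head //= IH // => X HX; apply: H.
by rewrite inE HX orbT.
Qed.

Lemma phi_sentence A (Lb : seq (plab A)) (s : nat) (Q : seq nat) :
  s \in Q -> is_sentence (phi Lb Q s).
Proof.
move=> HsQ; split.
- rewrite /phi /= fv1_ex2s /body /=.
  rewrite fv1_conjL; last first.
    move=> b _; apply: fv1_conjL => q _; rewrite /clause.
    by case: (trans b q) => // q'; case: ifP.
  rewrite fv1_disjL //.
  move=> c _; apply: fv1_disjL => q _; rewrite /accCl; by case: ifP.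
- rewrite /phi /= fv2_ex2s; apply: filter_notin_nil.
  rewrite /body /= => X; rewrite !mem_cat => /or3P [H|H|H].
  + move: X H; apply: fv2_conjL => b _; apply: fv2_conjL => q /In_mem Hq X.
    rewrite /clause; case: (trans b q) => [q'|] /=; last by rewrite in_nil.
    case: ifP => Hq' /=; last by rewrite in_nil.
    by rewrite !inE => /orP [/eqP ->|/eqP ->].
  + by move: H => /eqP ->.
  + move: X H; apply: fv2_disjL => c _; apply: fv2_disjL => q /In_mem Hq X.
    rewrite /accCl; case: ifP => _ /=; last by rewrite in_nil.
    by rewrite inE => /eqP ->.
Qed.

Lemma over_conjL A ar tau T (l : seq T) (F : T -> mso A) :
  (forall x, List.In x l -> over_Rtree ar tau (F x)) -> over_Rtree ar tau (conjL l F).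
Proof. elim: l => //= y l IH H; split; [apply: H; by left | apply: IH => x Hx; apply: H; by right]. Qed.

Lemma over_disjL A ar tau T (l : seq T) (F : T -> mso A) :
  (forall x, List.In x l -> over_Rtree ar tau (F x)) -> over_Rtree ar tau (disjL l F).
Proof. elim: l => //= y l IH H; split; [apply: H; by left | apply: IH => x Hx; apply: H; by right]. Qed.

Lemma over_ex2s A ar tau (g : mso A) Q :
  over_Rtree ar tau (foldr (fun X g => MEx2 X g) g Q) = over_Rtree ar tau g.
Proof. by elim: Q => //= q Q ->. Qed.

Lemma phi_over A ar tau (Lb : seq (plab A)) (s : nat) (Q : seq nat) :
  (forall b, List.In b Lb -> in_Bparse ar tau b) ->
  over_Rtree ar tau (phi Lb Q s).
Proof.
move=> HL; rewrite /phi /= over_ex2s /body /=; split; last split=> //.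
- apply: over_conjL => b Hb; apply: over_conjL => q _; rewrite /clause.
  case Ht: (trans b q) => [q'|] //; case: ifP => // _ /=.
  split=> //; split; first exact: HL.
  by move: Ht; case: b {Hb} .
- apply: over_disjL => c Hc; apply: over_disjL => q _; rewrite /accCl.
  case Ha: (acc c q) => //=; split=> //; split; first exact: HL.
  by move: Ha; case: c {Hc}.
Qed.

Lemma cover_filter {T} (P : T -> Prop) (l : seq T) :
  exists l', (forall x, List.In x l' -> P x) /\ (forall x, P x -> List.In x l -> List.In x l').
Proof.
elim: l => [|y l [l' [H1 H2]]]; first by exists [::].
case: (classic (P y)) => Hy.
- exists (y :: l'); split.
  + by move=> x [<-|/H1].
  + by move=> x Hx [->|Hl]; [left | right; apply: H2].
- exists l'; split=> // x Hx [Ex|Hl]; [by subst | exact: H2].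
Qed.

Fixpoint prodL {T U} (l1 : seq T) (l2 : seq U) : seq (T * U) :=
  match l1 with [::] => [::] | x :: l => map (pair x) l2 ++ prodL l l2 end.

Lemma In_prodL {T U} (l1 : seq T) (l2 : seq U) x y :
  List.In x l1 -> List.In y l2 -> List.In (x, y) (prodL l1 l2).
Proof.
elim: l1 => //= z l IH [<-|Hx] Hy; apply/In_cat; [left; exact: In_map | right; exact: IH].
Qed.

Lemma seqs_cover (tau : {fset nat}) k : exists l, forall ss : seq nat,
  size ss = k -> all (fun v => v \in tau) ss -> List.In ss l.
Proof.
elim: k => [|k [l Hl]].
- by exists [:: [::]] => ss /size0nil -> _; left.
- exists (map (fun p => p.1 :: p.2) (prodL (enum_fset tau) l)).
  case=> // x t [Ht] /andP [Hx Hall].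
  apply: (In_map (fun p : nat * seq nat => p.1 :: p.2) (x := (x, t))).
  apply: In_prodL; [exact/In_mem | exact: Hl].
Qed.

Lemma edges_cover (A : finType) (ar : A -> nat) (tau : {fset nat}) (la : seq A) :
  exists l, forall a ss, a \in la -> size ss = ar a -> all (fun v => v \in tau) ss ->
    List.In (a, ss) l.
Proof.
elim: la => [|a0 la [l Hl]]; first by exists [::].
have [l0 H0] := seqs_cover tau (ar a0).
exists (map (pair a0) l0 ++ l) => a ss; rewrite inE => /orP [/eqP ->|Ha] Hs Hall; apply/In_cat.
- left; apply: In_map; exact: H0.
- right; exact: Hl.
Qed.

Lemma perm_tau (tau : {fset nat}) (al ali : nat -> nat) x :
  cancel al ali -> (forall y, y \notin tau -> al y = y) -> x \in tau -> al x \in tau.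
Proof.
move=> c1 Hfix Hx; apply: contraT => Hn.
have := Hfix _ Hn => /(congr1 ali); rewrite !c1 => Eq.
move: Hn; rewrite Eq => /negP H; exfalso; exact: H Hx.
Qed.

Definition canon (tau : {fset nat}) (m : seq nat) (x : nat) : nat :=
  if x \in enum_fset tau then nth x m (index x (enum_fset tau)) else x.

Lemma canon_eq (tau : {fset nat}) (al : nat -> nat) :
  (forall y, y \notin tau -> al y = y) -> al = canon tau (map al (enum_fset tau)).
Proof.
move=> Hfix; apply: functional_extensionality => x; rewrite /canon.
case: ifP => Hx.
- by rewrite (nth_map x) ?index_mem // nth_index.
- rewrite Hfix //; apply/negP => H; move: Hx; move/negbT/negP => Hn; exact: Hn H.
Qed.

Lemma Lb_exists (A : finType) (ar : A -> nat) (tau : {fset nat}) :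
  exists Lb : seq (plab A), (forall b, List.In b Lb -> in_Bparse ar tau b) /\
                            (forall b, in_Bparse ar tau b -> List.In b Lb).
Proof.
set Fs := enum_fset (fpowerset tau).
have HFs : forall sigma, (sigma `<=` tau)%fset -> List.In sigma Fs.
  by move=> sigma H; apply/In_mem; rewrite /Fs; have := H; rewrite -fpowersetE.
have [Le HLe] := edges_cover ar tau (enum A).
have [Ls HLs] := seqs_cover tau (size (enum_fset tau)).
set L := map (@PZero A) Fs ++ map (@PRestrict A) Fs ++ map (fun p => PEdge p.1 p.2) Le ++
         map (fun p => @PRename A (canon tau p.1) (canon tau p.2)) (prodL Ls Ls).
have HL : forall b, in_Bparse ar tau b -> List.In b L.
  case=> [sigma|a ss|sigma|al ali] /=.
  - move=> H; apply/In_cat; left; apply: In_map; exact: HFs.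
  - move=> [Hs Hall]; do 2 (apply/In_cat; right); apply/In_cat; left.
    apply: (In_map (fun p : A * seq nat => PEdge p.1 p.2) (x := (a, ss))).
    by apply: HLe; rewrite ?mem_enum.
  - move=> H; apply/In_cat; right; apply/In_cat; left; apply: In_map; exact: HFs.
  - case=> c1 [c2 Hfix].
    have Hfix' : forall y, y \notin tau -> ali y = y.
      by move=> y Hy; rewrite -{1}(Hfix y Hy) c1.
    do 3 (apply/In_cat; right).
    rewrite (canon_eq Hfix) (canon_eq Hfix').
    apply: (In_map (fun p : seq nat * seq nat => @PRename A (canon tau p.1) (canon tau p.2))
             (x := (map al (enum_fset tau), map ali (enum_fset tau)))).
    apply: In_prodL; apply: HLs; rewrite ?size_map //; apply/allP => y /mapP [z Hz ->].
    + exact: perm_tau c1 Hfix Hz.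
    + exact: perm_tau c2 Hfix' Hz.
have [Lb [H1 H2]] := cover_filter (in_Bparse ar tau) L.
exists Lb; split=> // b Hb; apply: H2 => //; exact: HL.
Qed.

Theorem lemma5p6 (A : finType) (ar : A -> nat) (tau : {fset nat}) (s : nat) :
  exists phi : mso A,
    is_sentence phi /\ over_Rtree ar tau phi /\
    forall T : tterm A, in_TB ar tau T ->
      (models (enc T) phi <-> has_source (hr_value T) s).
Proof.
have [Lb [HL1 HL2]] := Lb_exists ar tau.
exists (phi Lb (s :: enum_fset tau) s); split; first by apply: phi_sentence; rewrite mem_head.
split; first exact: phi_over.
move=> T HT; case B: (build T) => [[n r] E].
have [I Hs] := key B HT.
rewrite Hs -(mso_ok s HL2 I) /enc B; reflexivity.
Qed.
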